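(* There exist constants $\eta>0$, $c>0$ and $N_0$ such that for every integer $N\geq N_0$ the following holds: if $\{0,1\}^N$ is partitioned into clusters such that whenever $u,v$ lie in the same cluster there are at most $\eta\cdot2^N$ points $w\in\{0,1\}^N$ with $d_H(u,w)\geq N/2$ and $d_H(v,w)\leq N/2-\sqrt N$, then the number of clusters is at least $2^{cN}$.
   Context: $d_H$ denotes the Hamming distance on $\{0,1\}^N$. *)

(* Defs.v *)
From mathcomp Require Import all_boot.
From Stdlib Require Import Reals.
Set Implicit Arguments. Unset Strict Implicit. Unset Printing Implicit Defensive.

Definition cube (N : nat) := {ffun 'I_N -> bool}.

Definition dH (N : nat) (u w : cube N) : nat := #|[set i | u i != w i]|.

Definition Rleb (x y : R) : bool := if Rle_dec x y then true else false.

Definition bad_set (N : nat) (u v : cube N) : {set cube N} :=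
  [set w : cube N | Rleb (INR N / 2) (INR (dH u w))
                 && Rleb (INR (dH v w)) (INR N / 2 - sqrt (INR N))].

(* Main.v *)
Require Import Defs.
From mathcomp Require Import all_boot.
From Stdlib Require Import Reals.
From Stdlib Require Import Lra Lia.
From mathcomp Require Import zify.
Set Implicit Arguments. Unset Strict Implicit. Unset Printing Implicit Defensive.


Lemma pascal_sum n (F : nat -> nat) :
  \sum_(k < n.+2) 'C(n.+1,k) * F k = \sum_(k < n.+1) 'C(n,k) * (F k + F k.+1).
Proof.
rewrite big_ord_recl bin0 mul1n.
under eq_bigr do rewrite /= binS mulnDl.
rewrite big_split /=.
under [in RHS]eq_bigr do rewrite mulnDr.
rewrite big_split /= addnA; congr (_ + _).
rewrite [RHS]big_ord_recl bin0 mul1n; congr (_ + _).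
rewrite big_ord_recr /= bin_small // mul0n addn0.
by apply: eq_bigr => i _; rewrite /bump /=.
Qed.

Lemma sum_bin0 n : \sum_(k < n.+1) 'C(n,k) = expn 2 n.
Proof.
elim: n => [|n IH]; first by rewrite big_ord1.
have := pascal_sum n (fun _ => 1).
under eq_bigr do rewrite muln1.
move=> ->.
have -> : \sum_(k < n.+1) 'C(n, k) * (1 + 1) = 2 * \sum_(k < n.+1) 'C(n, k).
  rewrite big_distrr /=; apply: eq_bigr => k _; lia.
by rewrite IH expnS.
Qed.

Lemma sum_bin1 n : \sum_(k < n.+1) 'C(n,k) * (2 * k) = n * expn 2 n.
Proof.
elim: n => [|n IH]; first by rewrite big_ord1.
rewrite pascal_sum.
have -> : \sum_(k < n.+1) 'C(n, k) * (2 * k + 2 * k.+1)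
   = 2 * \sum_(k < n.+1) 'C(n, k) * (2 * k) + 2 * \sum_(k < n.+1) 'C(n,k).
  rewrite !big_distrr -big_split /=; apply: eq_bigr => k _; lia.
rewrite IH sum_bin0 expnS; lia.
Qed.

Lemma sum_bin2 n : \sum_(k < n.+1) 'C(n,k) * (4 * expn k 2) = n * n.+1 * expn 2 n.
Proof.
elim: n => [|n IH]; first by rewrite big_ord1.
rewrite (pascal_sum n (fun k => 4 * expn k 2)).
have -> : \sum_(k < n.+1) 'C(n, k) * (4 * expn k 2 + 4 * expn k.+1 2)
   = 2 * \sum_(k < n.+1) 'C(n, k) * (4 * expn k 2) + 4 * \sum_(k < n.+1) 'C(n,k) * (2 * k)
     + 4 * \sum_(k < n.+1) 'C(n,k).
  rewrite !big_distrr -!big_split /=; apply: eq_bigr => k _; lia.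
rewrite IH sum_bin1 sum_bin0 expnS; lia.
Qed.

Lemma sum_subsets (T : finType) (D : {set T}) (F : nat -> nat) :
  \sum_(Y : {set T} | Y \subset D) F #|Y| = \sum_(k < #|D|.+1) 'C(#|D|,k) * F k.
Proof.
rewrite (partition_big (fun Y : {set T} => (inord #|Y| : 'I_(#|D|.+1))) predT) //=.
apply: eq_bigr => k _.
transitivity (\sum_(Y : {set T} | Y \in [set Y : {set T} | Y \subset D & #|Y| == k]) F k).
  apply: eq_big => Y.
    rewrite inE; case YD: (Y \subset D) => //=.
    have le := subset_leq_card YD.
    apply/eqP/eqP => [E|E]; first by rewrite -E inordK.
    by apply/val_inj; rewrite /= inordK // E.
  move=> /andP[YD /eqP E]; congr F; rewrite -E inordK //.
  exact: subset_leq_card.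
by rewrite sum_nat_const cards_draws mulnC.
Qed.

Lemma card_subsets (T : finType) (D : {set T}) (p : pred nat) :
  #|[set Y : {set T} | Y \subset D & p #|Y|]| = \sum_(k < #|D|.+1) 'C(#|D|,k) * p k.
Proof.
rewrite -(sum_subsets D (fun k => nat_of_bool (p k))) -sum1dep_card big_mkcondr /=.
by apply: eq_bigr => Y _; case: (p _).
Qed.

Lemma ratio_step n a j : 4 * a <= n -> n <= 2 * (j.+1) + 4 * a -> 2 * (n - j) <= n + 4 * a ->
  'C(n, j.+1) * (n - 4 * a) <= 'C(n, j) * (n + 4 * a).
Proof.
move=> h1 h2 h3.
rewrite -(@leq_pmul2r j.+1) // mulnAC [X in X * _ <= _]mulnC mul_bin_left.
have K : (n - j) * (n - 4 * a) <= (n + 4 * a) * j.+1 by nia.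
have := leq_mul (leqnn ('C(n, j))) K.
by rewrite !mulnA (mulnC _ ('C(n, j))).
Qed.

Lemma ratio_iter n a k i : 4 * a <= n -> i <= a -> n < 2 * (k + a) -> a <= k ->
  'C(n, k) * expn (n - 4 * a) i <= 'C(n, k - i) * expn (n + 4 * a) i.
Proof.
move=> h1 + h3 h4; elim: i => [|i IH] hi; first by rewrite !expn0 !muln1 subn0.
have IH' := IH (ltnW hi).
rewrite !expnS (mulnC (n - 4 * a)) mulnA.
apply: (leq_trans (leq_mul IH' (leqnn _))).
rewrite -mulnA (mulnC _ (n - 4 * a)) mulnA.
rewrite [X in _ <= X]mulnA [X in _ <= X * _](mulnC _ (n + 4 * a)).
rewrite leq_mul2r; apply/orP; right.
have E : k - i = (k - i.+1).+1 by lia.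
rewrite E mulnC.
rewrite (mulnC (n + 4 * a)).
rewrite mulnC; apply: ratio_step => //; lia.
Qed.

Definition Tsum n a := \sum_(k < n.+1) 'C(n,k) * (2 * (k + a) <= n).
Definition Csum n a := \sum_(k < n.+1) 'C(n,k) * ((2 * k <= n) && (n < 2 * (k + a))).

Lemma tail_half n a : expn 2 n <= 2 * (Tsum n a + Csum n a).
Proof.
have HL : expn 2 n = \sum_(k < n.+1) 'C(n,k) * (2 * k <= n) + \sum_(k < n.+1) 'C(n,k) * (n < 2 * k).
  rewrite -sum_bin0 -big_split /=; apply: eq_bigr => k _.
  by case: leqP => _ /=; rewrite ?muln1 ?muln0 ?addn0.
have TC : Tsum n a + Csum n a = \sum_(k < n.+1) 'C(n,k) * (2 * k <= n).
  rewrite /Tsum /Csum -big_split /=; apply: eq_bigr => k _.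
  rewrite -mulnDr; congr (_ * _).
  case: (leqP (2 * (k + a)) n) => h1; case: (leqP (2 * k) n) => h2 /=; lia.
have LH : \sum_(k < n.+1) 'C(n,k) * (n < 2 * k) <= \sum_(k < n.+1) 'C(n,k) * (2 * k <= n).
  rewrite -(big_mkord (fun _ => true) (fun k => 'C(n,k) * (n < 2 * k))).
  rewrite -(big_mkord (fun _ => true) (fun k => 'C(n,k) * (2 * k <= n))).
  rewrite big_nat_rev /=.
  rewrite (@eq_big_nat _ _ _ 0 n.+1 _ (fun k => 'C(n,k) * (n < 2 * (n - k)))); last first.
    move=> k /andP[_ hk]; rewrite add0n subSS bin_sub //.
  apply: leq_sum => k _; case: (ltnP n (2 * (n - k))) => h /=; last by rewrite muln0.
  have -> : 2 * k <= n by lia.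
  by [].
rewrite TC HL; lia.
Qed.

Lemma tail_shift n a : 4 * a <= n -> Csum n a * expn (n - 4 * a) a <= Tsum n a * expn (n + 4 * a) a.
Proof.
move=> h.
pose bc k := (2 * k <= n) && (n < 2 * (k + a)).
have S1 : Csum n a * expn (n - 4 * a) a <= expn (n + 4 * a) a * \sum_(k < n.+1) 'C(n, k - a) * bc k.
  rewrite /Csum big_distrl big_distrr /=; apply: leq_sum => k _.
  rewrite /bc; case: (boolP ((2 * k <= n) && (n < 2 * (k + a)))) => /= hb; last by rewrite !muln0.
  rewrite !muln1 mulnC [X in _ <= X]mulnC; move/andP: hb => [hb1 hb2].
  rewrite mulnC; apply: (@ratio_iter n a k a); lia.
apply: (leq_trans S1); rewrite mulnC leq_mul2r; apply/orP; right.
rewrite -(big_mkord (fun _ => true) (fun k => 'C(n, k - a) * bc k)).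
rewrite (@big_cat_nat _ _ _ a) //=; last by lia.
rewrite big1_seq ?add0n; last first.
  move=> k /andP[_]; rewrite mem_index_iota => /andP[_ hk].
  rewrite /bc; have -> : n < 2 * (k + a) = false by lia.
  by rewrite andbF muln0.
rewrite -{1}[a]add0n big_addn.
rewrite /Tsum -(big_mkord (fun _ => true) (fun k => 'C(n, k) * (2 * (k + a) <= n))).
rewrite (@big_cat_nat _ _ _ (n.+1 - a) 0 n.+1) //=; last by lia.
apply: leq_trans (leq_addr _ _).
apply: leq_sum => k _; rewrite addnK /bc.
case: (leqP (2 * (k + a)) n) => _ /=; first by rewrite leq_mul2l leq_b1 orbT.
by rewrite muln0.
Qed.

Definition good s r k := (2 * k <= s + 2 * r) && (s <= 2 * k + 2 * r).

Lemma cheb s r : 4 * expn r 2 * \sum_(k < s.+1) 'C(s,k) * ~~ good s r k <= s * expn 2 s.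
Proof.
set X := \sum_(k < s.+1) _.
have E1 : 4 * expn r 2 * X + 2 * s * \sum_(k < s.+1) 'C(s,k) * (2 * k)
   = \sum_(k < s.+1) 'C(s,k) * (4 * expn r 2 * ~~ good s r k + 2 * s * (2 * k)).
  rewrite /X !big_distrr -big_split /=; apply: eq_bigr => k _; lia.
have E2 : \sum_(k < s.+1) 'C(s,k) * (4 * expn k 2) + expn s 2 * \sum_(k < s.+1) 'C(s,k)
   = \sum_(k < s.+1) 'C(s,k) * (4 * expn k 2 + expn s 2).
  rewrite !big_distrr -big_split /=; apply: eq_bigr => k _; lia.
have L : \sum_(k < s.+1) 'C(s,k) * (4 * expn r 2 * ~~ good s r k + 2 * s * (2 * k))
   <= \sum_(k < s.+1) 'C(s,k) * (4 * expn k 2 + expn s 2).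
  apply: leq_sum => k _; rewrite leq_mul2l; apply/orP; right.
  move: (nat_of_ord k) => {}k.
  rewrite /good; case: (leqP (2 * k) (s + 2 * r)) => h1;
    case: (leqP s (2 * k + 2 * r)) => h2 /=; try nia.
  case: (leqP (2 * k) s) => h3.
    have [d hd] : exists d, s = 2 * k + d by exists (s - 2 * k); lia.
    nia.
  have [d hd] : exists d, 2 * k = s + d by exists (2 * k - s); lia.
  nia.
move: L; rewrite -E1 -E2 sum_bin2 sum_bin1 sum_bin0.
set P := expn 2 s; nia.
Qed.

Lemma INR_expn m n : INR (expn m n) = (pow (INR m) n)%R.
Proof. elim: n => [|n IH]; first by rewrite expn0. by rewrite expnS mult_INR IH. Qed.

Lemma exp_powR y n : (pow (exp y) n = exp (y * INR n))%R.
Proof.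
elim: n => [|n IH]; first by rewrite /= Rmult_0_r exp_0.
rewrite S_INR /= IH -exp_plus; f_equal; ring.
Qed.

Lemma exp_le_1mx x : (0 <= x <= 1/2 -> exp (-2 * x) <= 1 - x)%R.
Proof.
move=> [h0 h1].
have H := exp_ineq1_le (2 * x).
have E : (exp (-2 * x) * exp (2 * x) = 1)%R by rewrite -exp_plus; replace (-2 * x + 2 * x)%R with 0%R by ring; apply exp_0.
have hp := exp_pos (-2 * x).
nra.
Qed.

Lemma ratio_real (d a : nat) : (16 * a <= d)%N -> (a * a <= 64 * d)%N ->
  (exp (-1024) * pow (INR (d + 4 * a)) a <= pow (INR (d - 4 * a)) a)%R.
Proof.
move=> h1 h2.
have E1 : INR (d + 4 * a) = (INR d + 4 * INR a)%R.
  by rewrite plus_INR mult_INR /=; ring.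
have E2 : INR (d - 4 * a) = (INR d - 4 * INR a)%R.
  rewrite minus_INR; last by apply/leP; lia.
  by rewrite mult_INR /=; ring.
have h1R : (16 * INR a <= INR d)%R.
  have := le_INR _ _ (elimT leP h1); by rewrite mult_INR /=; lra.
have h2R : (INR a * INR a <= 64 * INR d)%R.
  have := le_INR _ _ (elimT leP h2); by rewrite !mult_INR /=; lra.
have ha := pos_INR a.
rewrite E1 E2.
set y := (INR d + 4 * INR a)%R.
case: (Req_dec (INR a) 0) => [a0|an0].
  have -> : a = 0%N by apply: INR_eq; rewrite a0.
  rewrite /= Rmult_1_r; have := exp_increasing (-1024) 0; rewrite exp_0; lra.
have hy : (0 < y)%R by rewrite /y; lra.
set X := (8 * INR a / y)%R.
have EX : (INR d - 4 * INR a = y * (1 - X))%R by rewrite /X /y; field; lra.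
have EXy : (X * y = 8 * INR a)%R by rewrite /X; field; lra.
have hX : (0 <= X <= 1/2)%R.
  have : (0 <= X)%R by rewrite /X; apply: Rmult_le_pos; [lra | apply: Rlt_le; apply: Rinv_0_lt_compat].
  rewrite /y in hy EXy; nra.
rewrite EX Rpow_mult_distr (Rmult_comm (exp _)).
apply: Rmult_le_compat_l; first by apply: pow_le; lra.
apply: (Rle_trans _ (pow (exp (-2 * X)) a)); last first.
  apply: pow_incr; split; [apply: Rlt_le; apply: exp_pos | exact: exp_le_1mx].
rewrite exp_powR.
apply: Rlt_le; apply: exp_increasing.
have E3 : (X * INR a * y = 8 * INR a * INR a)%R by rewrite -EXy; ring.
have hapos : (0 < INR a)%R by lra.
have : (X * INR a * y < 512 * y)%R by rewrite E3 /y; nra.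
move=> H; have : (X * INR a < 512)%R by nra.
lra.
Qed.

Lemma Rleb_true x y : (x <= y)%R -> Rleb x y = true.
Proof. by rewrite /Rleb; case: Rle_dec. Qed.

Lemma card_sub_subsets N (Y Z D : {set 'I_N}) :
  Y \subset D -> Z \subset ~: D -> (Y :|: Z) :&: D = Y /\ (Y :|: Z) :\: D = Z.
Proof.
move=> /subsetP YD /subsetP ZD; split; apply/setP => i; rewrite !inE.
  case hY: (i \in Y); first by rewrite (YD _ hY).
  by case hZ: (i \in Z) => //=; have := ZD _ hZ; rewrite inE => /negbTE ->.
case hZ: (i \in Z); first by have := ZD _ hZ; rewrite inE => /negbTE ->; rewrite orbT.
case hY: (i \in Y) => /=; first by rewrite (YD _ hY).
by rewrite andbF.
Qed.

Lemma count_bad N (u v : cube N) (r : nat) : (N <= r * r)%N ->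
  (Tsum #|[set i | u i != v i]| (2 * r) *
   \sum_(k < #|~: [set i | u i != v i]|.+1) 'C(#|~: [set i | u i != v i]|, k) *
        good #|~: [set i | u i != v i]| r k <= #|bad_set u v|)%N.
Proof.
move=> hNr.
set D := [set i | u i != v i]; set s := #|~: D|.
pose G1 := [set Y : {set 'I_N} | Y \subset D & 2 * (#|Y| + 2 * r) <= #|D|].
pose G2 := [set Z : {set 'I_N} | Z \subset ~: D & good s r #|Z|].
have c1 : #|G1| = Tsum #|D| (2 * r) by rewrite (card_subsets D (fun k => 2 * (k + 2 * r) <= #|D|)).
have c2 : #|G2| = \sum_(k < s.+1) 'C(s, k) * good s r k by rewrite (card_subsets (~: D) (good s r)).
pose f (p : {set 'I_N} * {set 'I_N}) : cube N :=
  [ffun i => if i \in p.1 :|: p.2 then ~~ v i else v i].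
have fX p i : (v i != f p i) = (i \in p.1 :|: p.2).
  by rewrite /f ffunE; case: (i \in _); case: (v i).
rewrite -c1 -c2 -cardsX -(@card_in_imset _ _ f).
  apply: subset_leq_card; apply/subsetP => w /imsetP [[Y Z] hp ->].
  move: hp; rewrite in_setX !inE => /andP[/andP[YD hY] /andP[ZD hZ]].
  have [e1 e2] := card_sub_subsets YD ZD.
  have YZ0 : Y :&: Z = set0.
    apply/setP => i; rewrite !inE; case hi: (i \in Y) => //=.
    apply/negP => iZ; have := subsetP ZD _ iZ; by rewrite inE (subsetP YD _ hi).
  have dv : dH v (f (Y, Z)) = (#|Y| + #|Z|)%N.
    rewrite /dH; have -> : [set i | v i != f (Y, Z) i] = Y :|: Z.
      by apply/setP => i; rewrite inE fX.
    by rewrite cardsU YZ0 cards0 subn0.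
  have du : (#|D| - #|Y| + #|Z| <= dH u (f (Y, Z)))%N.
    rewrite /dH.
    have sub : (D :\: Y) :|: Z \subset [set i | u i != f (Y, Z) i].
      apply/subsetP => i; rewrite !inE /f ffunE /= in_setU.
      case/orP => [/andP[hnY hD] | hZ'].
        have hnZ : (i \in Z) = false.
          apply/negP => iZ; have := subsetP ZD _ iZ; by rewrite !inE hD.
        by rewrite (negbTE hnY) hnZ.
      have := subsetP ZD _ hZ'; rewrite !inE negbK => /eqP ->.
      by rewrite hZ' orbT; case: (v i).
    apply: leq_trans (subset_leq_card sub).
    have DZ : (D :\: Y) :&: Z = set0.
      apply/setP => i; rewrite !inE; apply/negbTE/negP => /andP[/andP[_ hD] iZ].
      by have := subsetP ZD _ iZ; rewrite !inE hD.
    rewrite cardsU DZ cards0 subn0 cardsD.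
    have -> : D :&: Y = Y by apply/setIidPr.
    by [].
  have hYD : (#|Y| <= #|D|)%N by apply: subset_leq_card.
  have hN : (#|D| + s = N)%N by rewrite /s cardsC card_ord.
  have nat1 : (N <= 2 * dH u (f (Y, Z)))%N.
    move: hZ; rewrite /good => /andP[g1 g2]; lia.
  have nat2 : (2 * dH v (f (Y, Z)) + 2 * r <= N)%N.
    move: hZ; rewrite /good dv => /andP[g1 g2]; lia.
  have sqr : (sqrt (INR N) <= INR r)%R.
    rewrite -(sqrt_square (INR r)); last exact: pos_INR.
    apply: sqrt_le_1_alt; rewrite -mult_INR; apply: le_INR; exact/leP.
  have R1 : (INR N <= 2 * INR (dH u (f (Y, Z))))%R.
    have := le_INR _ _ (elimT leP nat1); by rewrite mult_INR.
  have R2 : (2 * INR (dH v (f (Y, Z))) + 2 * INR r <= INR N)%R.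
    have := le_INR _ _ (elimT leP nat2); by rewrite plus_INR !mult_INR.
  rewrite !Rleb_true //; lra.
move=> [Y Z] [Y' Z']; rewrite !in_setX !inE => /andP[/andP[YD _] /andP[ZD _]]
  /andP[/andP[YD' _] /andP[ZD' _]] eqf.
have U : Y :|: Z = Y' :|: Z'.
  apply/setP => i; move: (fX (Y, Z) i) (fX (Y', Z') i) => /= <- <-; by rewrite eqf.
have [e1 e2] := card_sub_subsets YD ZD.
have [e1' e2'] := card_sub_subsets YD' ZD'.
by congr pair; [rewrite -e1 U e1' | rewrite -e2 U e2'].
Qed.

Lemma weight_sum N (u0 : cube N) :
  \sum_(w : cube N) \prod_(i < N) (if w i == u0 i then 3 else 1) = expn 4 N.
Proof.
rewrite /cube -(bigA_distr_bigA (fun i (b : bool) => if b == u0 i then 3 else 1)) /=.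
have -> : \prod_(i < N) \sum_(b : bool) (if b == u0 i then 3 else 1) = \prod_(i < N) 4.
  apply: eq_bigr => i _; rewrite big_bool /=; by case: (u0 i).
by rewrite prod_nat_const card_ord.
Qed.

Lemma weight_eq N (u0 w : cube N) :
  \prod_(i < N) (if w i == u0 i then 3 else 1) = expn 3 (N - dH u0 w).
Proof.
rewrite -big_mkcond /=.
have -> : \prod_(i < N | w i == u0 i) 3 = \prod_(i in [set i | w i == u0 i]) 3.
  by apply: eq_bigl => i; rewrite inE.
rewrite prod_nat_const; congr expn.
have E := cardsC [set i | w i == u0 i]; rewrite card_ord in E.
have E2 : ~: [set i | w i == u0 i] = [set i | u0 i != w i].
  by apply/setP => i; rewrite !inE eq_sym.
rewrite E2 in E; rewrite /dH; lia.
Qed.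

Lemma ball_bound N (C : {set cube N}) :
  (forall u v, u \in C -> v \in C -> 4 * dH u v <= N)%N ->
  (expn #|C| 4 * expn 27 N <= expn 256 N)%N.
Proof.
move=> hC.
have [u0 u0C|C0] := pickP (mem C); last first.
  by rewrite (eq_card0 C0) exp0n // mul0n.
set m := N - N %/ 4.
have H1 : (#|C| * expn 3 m <= expn 4 N)%N.
  rewrite -(weight_sum u0) -sum_nat_const.
  apply: (@leq_trans (\sum_(w in C) \prod_(i < N) (if w i == u0 i then 3 else 1))).
    apply: leq_sum => w wC; rewrite weight_eq; apply: leq_pexp2l => //.
    have := hC _ _ u0C wC; rewrite /m.
    move: (dH u0 w) => x hx.
    have : x <= N %/ 4 by rewrite leq_divRL // mulnC.
    lia.
  rewrite [X in _ <= X](bigID (mem C)) /=; exact: leq_addr.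
have E27 : expn 27 N = expn 3 (3 * N) by rewrite expnM.
have E256 : expn 256 N = expn (expn 4 N) 4 by rewrite -expnM mulnC expnM.
rewrite E256 E27.
apply: (@leq_trans (expn (#|C| * expn 3 m) 4)); last by rewrite leq_exp2r.
rewrite expnMn -expnM leq_mul2l; apply/orP; right.
apply: leq_pexp2l => //.
rewrite /m; have := leq_trunc_div N 4; lia.
Qed.

Lemma e16 : expn 2 16 = 256 * 256. Proof. by rewrite -[16]/(8 + 8) expnD. Qed.

Lemma sqrt_facts N : (256 * 256 <= N)%N ->
  let r := (Nat.sqrt N).+1 in (N <= r * r)%N /\ (r * r <= 4 * N)%N /\ (128 * r <= N)%N.
Proof.
move=> hN r.
have h := Nat.sqrt_spec' N.
have h1 : (1 <= Nat.sqrt N)%coq_nat by apply/Nat.sqrt_le_square; lia.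
have A : (N <= r * r)%N by rewrite /r; lia.
have B : (r * r <= 4 * N)%N by rewrite /r; nia.
split => //; split => //.
rewrite leqNgt; apply/negP => C.
have : (N.+1 * N.+1 <= (128 * r) * (128 * r))%N by apply: leq_mul.
nia.
Qed.

Lemma key N (u v : cube N) : (expn 2 16 <= N)%N -> (N < 4 * dH u v)%N ->
  (exp (-1024) / 16 * pow 2 N < INR #|bad_set u v|)%R.
Proof.
rewrite e16 => hN hd.
have [hr1 [hr2 h128]] := sqrt_facts hN.
move: (Nat.sqrt N).+1 hr1 hr2 h128 => r hr1 hr2 h128.
set D := [set i | u i != v i].
have dD : dH u v = #|D| by [].
rewrite dD in hd.
have CB := count_bad u v hr1.
rewrite -/D in CB.
have hds : (#|D| + #|~: D| = N)%N by rewrite cardsC card_ord.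
move: hd CB hds; move: #|D| #|~: D| => d s hd CB hds.
set a := 2 * r.
have ha1 : (16 * a <= d)%N by rewrite /a; lia.
have ha2 : (a * a <= 64 * d)%N by rewrite /a; nia.
have ha4 : (4 * a <= d)%N by lia.
have apos : (0 < a)%N by rewrite /a; nia.
have T1 := tail_half d a.
have T2 := tail_shift ha4.
have CH := cheb s r.
set Good := \sum_(k < s.+1) 'C(s, k) * good s r k in CB.
set Bc := \sum_(k < s.+1) 'C(s, k) * ~~ good s r k in CH.
have GB : (Good + Bc = expn 2 s)%N.
  rewrite -sum_bin0 /Good /Bc -big_split; apply: eq_bigr => k _.
  by case: (good s r k); rewrite /= ?muln0 ?muln1 ?addn0.
have B4 : (4 * Bc <= expn 2 s)%N.
  have : (4 * Bc * (r * r) <= expn 2 s * (r * r))%N.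
    apply: (leq_trans _ (leq_mul (leqnn (expn 2 s)) hr1)).
    rewrite -[in X in _ <= X]hds (mulnC (expn 2 s)).
    apply: leq_trans (leq_trans CH _); first by rewrite -mulnn; lia.
    rewrite leq_mul2r; apply/orP; right; lia.
  by rewrite leq_pmul2r //; nia.
have X2 : (3 * expn 2 s <= 4 * Good)%N by lia.
set Y := expn (d - 4 * a) a in T2 *.
set Z := expn (d + 4 * a) a in T2 *.
have YZ : (Y <= Z)%N by rewrite /Y /Z leq_exp2r //; lia.
have X1 : (expn 2 d * Y <= 4 * Tsum d a * Z)%N.
  apply: (leq_trans (leq_mul T1 (leqnn Y))).
  nia.
have X3 : (3 * expn 2 N * Y <= 16 * #|bad_set u v| * Z)%N.
  have E : expn 2 N = expn 2 d * expn 2 s by rewrite -expnD hds.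
  rewrite E.
  have := leq_mul X1 X2.
  have := leq_mul (leq_mul (leqnn 16) CB) (leqnn Z).
  rewrite /a; nia.
have RR := ratio_real ha1 ha2.
have X3R := le_INR _ _ (elimT leP X3).
rewrite !mult_INR /Y /Z !INR_expn in X3R.
have I2 : INR 2 = 2%R by [].
have I3 : INR 3 = 3%R by rewrite INR_IZR_INZ.
have I16 : INR 16 = 16%R by rewrite INR_IZR_INZ.
rewrite I2 I3 I16 in X3R.
move: RR X3R; set y := pow (INR (d - 4 * a)) a; set z := pow (INR (d + 4 * a)) a.
set B := INR #|bad_set u v|; set P := pow 2 N => RR X3R.
have zpos : (0 < z)%R.
  rewrite /z; apply: pow_lt; apply: lt_0_INR; apply/ltP; lia.
have Ppos : (0 < P)%R by rewrite /P; apply: pow_lt; lra.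
have epos := exp_pos (-1024).
have H1 : (3 * P * (exp (-1024) * z) <= 16 * B * z)%R.
  apply: Rle_trans X3R; apply: Rmult_le_compat_l; [lra | exact: RR].
have H2 : (3 * P * exp (-1024) <= 16 * B)%R.
  apply: (Rmult_le_reg_r z) => //; lra.
have := Rmult_lt_0_compat _ _ Ppos epos.
nra.
Qed.

Theorem lemma5p7 :
  exists (eta c : R) (N0 : nat), (0 < eta)%R /\ (0 < c)%R /\
    forall (N : nat), (N0 <= N)%N ->
    forall (P : {set {set cube N}}),
      partition P [set: cube N] ->
      (forall (C : {set cube N}) (u v : cube N),
          C \in P -> u \in C -> v \in C ->
          (INR #|bad_set u v| <= eta * 2 ^ N)%R) ->
      (Rpower 2 (c * INR N) <= INR #|P|)%R.
Proof.
exists (exp (-1024) / 16)%R, (1/8)%R, (expn 2 16).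
split; first by apply: Rdiv_lt_0_compat; [apply: exp_pos | lra].
split; first by lra.
move=> N hN P hP hbad.
have diam C u v : C \in P -> u \in C -> v \in C -> (4 * dH u v <= N)%N.
  move=> CP uC vC; rewrite leqNgt; apply/negP => h.
  have := key hN h; have := hbad C u v CP uC vC; lra.
have ballC C : C \in P -> (expn #|C| 4 * expn 27 N <= expn 256 N)%N.
  by move=> CP; apply: ball_bound => u v; exact: diam.
have cardT : expn 2 N = (\sum_(C in P) #|C|)%N.
  by rewrite -(card_partition hP) cardsT card_ffun card_bool card_ord.
have Ppos : (0 < #|P|)%N.
  rewrite lt0n; apply/negP => /eqP P0.
  move: cardT; rewrite big_pred0; last by move=> C; rewrite (card0_eq P0).
  by move/eqP; rewrite expn_eq0.
have [C0 C0P HM] := eq_bigmax_cond (fun C : {set cube N} => #|C|) Ppos.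
set M := \max_(C in P) #|C| in HM.
have sumM : (\sum_(C in P) #|C| <= #|P| * M)%N.
  rewrite -sum_nat_const; apply: leq_sum => C CP; exact: leq_bigmax_cond.
have M4 : (expn M 4 * expn 27 N <= expn 256 N)%N by rewrite HM; apply: ballC.
have N0 : (0 < N)%N.
  move: hN; rewrite e16; lia.
have F : (expn 16 N * expn 27 N <= expn #|P| 4 * expn 256 N)%N.
  have E16 : expn 16 N = expn (expn 2 N) 4 by rewrite -expnM mulnC expnM.
  have h1 : (expn (expn 2 N) 4 <= expn #|P| 4 * expn M 4)%N by rewrite -expnMn leq_exp2r // cardT.
  rewrite E16; apply: leq_trans (leq_mul h1 (leqnn _)) _.
  by rewrite -mulnA leq_mul2l M4 orbT.
have FF := leq_mul F F.
have e1 : (expn 16 N * expn 16 N = expn 256 N)%N by rewrite -expnMn.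
have e2 : (expn 27 N * expn 27 N = expn 729 N)%N by rewrite -expnMn.
have e3 : (expn #|P| 4 * expn #|P| 4 = expn #|P| 8)%N by rewrite -expnD.
have e4 : (expn 512 N = expn 2 N * expn 256 N)%N by rewrite -expnMn.
have le5 : (expn 512 N <= expn 729 N)%N by rewrite leq_exp2r.
have K1 : (expn 256 N * expn 512 N <= expn 256 N * expn 729 N)%N by apply: leq_mul.
have K : (expn 2 N * expn 256 N * expn 256 N <= expn #|P| 8 * expn 256 N * expn 256 N)%N.
  have : (expn 256 N * expn 729 N <= expn #|P| 8 * expn 256 N * expn 256 N)%N.
    rewrite -e1 -e2 -e3; move: FF; lia.
  move: K1; rewrite e4; lia.
have pos256 : (0 < expn 256 N)%N by rewrite expn_gt0.
rewrite !leq_pmul2r // in K.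
have KR := le_INR _ _ (elimT leP K).
rewrite !INR_expn in KR.
have I2 : INR 2 = 2%R by [].
rewrite I2 in KR.
have PposR : (0 < INR #|P|)%R by apply: lt_0_INR; apply/ltP.
set x := Rpower 2 (1 / 8 * INR N).
have xpos : (0 < x)%R by rewrite /x /Rpower; apply: exp_pos.
have x8 : Rpower x (INR 8) = pow 2 N.
  rewrite /x Rpower_mult -Rpower_pow; last by lra.
  congr Rpower; have -> : INR 8 = 8%R by rewrite INR_IZR_INZ.
  field.
rewrite Rpower_pow // in x8.
apply: Rnot_lt_le => hlt.
have := Rlt_Rpower_l (INR #|P|) x (INR 8).
rewrite !Rpower_pow //.
move=> H; have := H (lt_0_INR 8 ltac:(lia)) (conj PposR hlt).
lra.
Qed.
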